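(* Let $p_1,p_2,p_3,\dots=2,3,5,7,\dots$ be the list of all primes, $T=\bigoplus_{n\in\mathbb N}\mathbb Z(p_n^n)$, $P=\prod_{n\in\mathbb N}\mathbb Z(p_n^n)$, and $\mathbf z\in P$ the element whose $n$-th coordinate is $1\in\mathbb Z(p_n^n)$ for every $n$. Let $G=\{\mathbf y\in P:\ k\mathbf y\in T+\mathbb Z\mathbf z \text{ for some integer } k\neq 0\}$, the purification of $T+\mathbb Z\mathbf z$ in $P$, so that $G$ is pure in $P$, $T$ is the torsion subgroup of $G$, and $G/T\cong\mathbb Q$. Then $G$ is strongly co-Hopfian and $G/T$ is strongly co-Hopfian, but $T$ is not strongly co-Hopfian; in particular $G$ is strongly co-Hopfian but not uniformly strongly co-Hopfian.
   Context: All groups are abelian. A group $G$ is strongly co-Hopfian if for every endomorphism $f$ of $G$ there is $n\in\mathbb N$ with $f^n(G)=f^{n+1}(G)$; it is uniformly strongly co-Hopfian if there is a fixed $m$ with $\phi^m(G)=\phi^{m+1}(G)$ for all endomorphisms $\phi$. $\mathbb Z(q)$ denotes the cyclic group of order $q$. *)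

(* Defs.v *)
From HB Require Import structures.
From mathcomp Require Import all_boot all_order all_algebra.
From mathcomp Require Import boolp.
Set Implicit Arguments. Unset Strict Implicit. Unset Printing Implicit Defensive.
Import Order.TTheory GRing.Theory Num.Theory.
Local Open Scope ring_scope.

(* An abelian group is given as a subgroup S
   (a predicate) of an ambient zmodType V; a quotient group S/K (K a subgroup
   of S) is handled through lifts: an endomorphism of S/K is represented by a
   map f : V -> V sending S into S which is additive modulo K and respects
   congruence modulo K.  (Every endomorphism of S/K arises this way, by choice
   of representatives.)  The subgroup f^n(S/K) of S/K is represented by its
   full preimage in S, i.e. f^n(S) + K. *)

Section CoHopf.
Variable V : zmodType.

Definition endo_mod (S K : V -> Prop) (f : V -> V) : Prop :=
  [/\ (forall x, S x -> S (f x)),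
      (forall x y, S x -> S y -> K (f (x + y) - (f x + f y)))
    & (forall x y, S x -> S y -> K (x - y) -> K (f x - f y))].

Definition image_mod (S K : V -> Prop) (f : V -> V) (n : nat) : V -> Prop :=
  fun y => S y /\ exists2 x, S x & K (y - iter n f x).

Definition strongly_coHopfian_quot (S K : V -> Prop) : Prop :=
  forall f, endo_mod S K f ->
    exists n : nat, forall y, image_mod S K f n y <-> image_mod S K f n.+1 y.

Definition unif_strongly_coHopfian_quot (S K : V -> Prop) : Prop :=
  exists m : nat, forall f, endo_mod S K f ->
    forall y, image_mod S K f m y <-> image_mod S K f m.+1 y.

Definition zero_sub : V -> Prop := fun x => x = 0.

Definition strongly_coHopfian (S : V -> Prop) : Prop :=
  strongly_coHopfian_quot S zero_sub.
Definition unif_strongly_coHopfian (S : V -> Prop) : Prop :=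
  unif_strongly_coHopfian_quot S zero_sub.

End CoHopf.

Lemma next_prime_ex (m : nat) : exists p, ((m < p)%N && prime p).
Proof. by case: (prime_above m) => p h1 h2; exists p; rewrite h1 h2. Qed.

Definition next_prime (m : nat) : nat := ex_minn (next_prime_ex m).

(* nth_prime i = p_(i+1): nth_prime 0 = 2, nth_prime 1 = 3, ... *)
Fixpoint nth_prime (i : nat) : nat :=
  if i is i'.+1 then next_prime (nth_prime i') else 2.

(* modulus of coordinate i (0-based): p_(i+1)^(i+1) *)
Definition modulus (i : nat) : nat := (nth_prime i ^ i.+1)%N.

Local Open Scope nat_scope.
Lemma nth_prime_ge2 i : (2 <= nth_prime i)%N.
Proof.
case: i => [//|i] /=; rewrite /next_prime.
by case: ex_minnP => p /andP[_ /prime_gt1].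
Qed.

Lemma modulus_gt1 i : (1 < modulus i)%N.
Proof.
rewrite /modulus; have h := nth_prime_ge2 i.
by rewrite -(exp1n i.+1) ltn_exp2r.
Qed.

(* since modulus i >= 2, 'Z_(modulus i) is exactly Z/(p^n)Z *)
Local Open Scope ring_scope.
Definition P : Type := forall i : nat, 'Z_(modulus i).

HB.instance Definition _ := Choice.on P.

Definition P_zero : P := fun i => 0.
Definition P_add (x y : P) : P := fun i => x i + y i.
Definition P_opp (x : P) : P := fun i => - x i.

Lemma P_addA : associative P_add.
Proof. by move=> x y z; apply: functional_extensionality_dep => i; rewrite /P_add addrA. Qed.
Lemma P_addC : commutative P_add.
Proof. by move=> x y; apply: functional_extensionality_dep => i; rewrite /P_add addrC. Qed.
Lemma P_add0 : left_id P_zero P_add.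
Proof. by move=> x; apply: functional_extensionality_dep => i; rewrite /P_add add0r. Qed.
Lemma P_addN : left_inverse P_zero P_opp P_add.
Proof. by move=> x; apply: functional_extensionality_dep => i; rewrite /P_add /P_opp addNr. Qed.

HB.instance Definition _ := GRing.isZmodule.Build P P_addA P_addC P_add0 P_addN.

Definition Tsub : P -> Prop :=
  fun x => exists N : nat, forall i, (N <= i)%N -> x i = 0.

Definition zvec : P := fun i => 1.

Definition Gsub : P -> Prop :=
  fun y => exists2 k : int, k != 0 &
           exists2 t, Tsub t & exists m : int, y *~ k = t + zvec *~ m.

(* Main.v *)
Require Import Defs.
From HB Require Import structures.
From mathcomp Require Import all_boot all_order all_algebra.
From mathcomp Require Import boolp.
From mathcomp Require Import zify ring.
Set Implicit Arguments. Unset Strict Implicit. Unset Printing Implicit Defensive.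
Import Order.TTheory GRing.Theory Num.Theory.

Lemma next_prime_spec m : (m < next_prime m)%N /\ prime (next_prime m).
Proof. by rewrite /next_prime; case: ex_minnP => p /andP[h1 h2] _. Qed.

Lemma nth_prime_prime i : prime (nth_prime i).
Proof. case: i => [//|i] /=; exact: (next_prime_spec _).2. Qed.

Lemma nth_prime_lt i : (nth_prime i < nth_prime i.+1)%N.
Proof. exact: (next_prime_spec _).1. Qed.

Lemma nth_prime_ge i : (i.+2 <= nth_prime i)%N.
Proof. elim: i => [//|i IH]; have := nth_prime_lt i; lia. Qed.

Lemma nth_prime_mono i j : (i < j)%N -> (nth_prime i < nth_prime j)%N.
Proof.
elim: j => [//|j IH]; rewrite ltnS leq_eqVlt => /orP[/eqP->|/IH h].
  exact: nth_prime_lt.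
exact: ltn_trans h (nth_prime_lt j).
Qed.

Lemma nth_prime_inj i j : nth_prime i = nth_prime j -> i = j.
Proof.
move=> e; case: (ltngtP i j) => // h; have := nth_prime_mono h; lia.
Qed.

Lemma coprime_modulus i j : i <> j -> coprime (modulus i) (modulus j).
Proof.
move=> ne; rewrite /modulus coprime_pexpl // coprime_pexpr //.
rewrite prime_coprime ?nth_prime_prime // dvdn_prime2 ?nth_prime_prime //.
by apply/eqP => /nth_prime_inj.
Qed.

Local Open Scope ring_scope.
Notation R i := 'Z_(modulus i).

Lemma R_nat_unit i (n : nat) : coprime (nth_prime i) n -> (n%:R : R i) \is a GRing.unit.
Proof. by move=> h; rewrite unitZpE ?modulus_gt1 // /modulus coprime_pexpl. Qed.

Lemma R_nat_eq0 i (n : nat) : ((n%:R : R i) == 0) = (modulus i %| n)%N.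
Proof.
apply/eqP/idP => [h|h].
  have := val_Zp_nat (modulus_gt1 i) n; rewrite h /= => /esym/eqP.
  by rewrite -/(dvdn _ _).
by apply/val_inj; rewrite /= val_Zp_nat ?modulus_gt1 //; apply/eqP.
Qed.

Lemma R_nilp i (a : R i) : a \isn't a GRing.unit -> a ^+ i.+1 = 0.
Proof.
rewrite -(natr_Zp a) unitZpE ?modulus_gt1 // /modulus coprime_pexpl //.
rewrite prime_coprime ?nth_prime_prime // negbK => hd.
by rewrite -natrX; apply/eqP; rewrite R_nat_eq0 dvdn_exp2r.
Qed.

Lemma R_int_unit i (c : int) : c != 0 -> (`|c| < i)%N -> (c%:~R : R i) \is a GRing.unit.
Proof.
move=> c0 ci.
have hc : coprime (nth_prime i) `|c|%N.
  rewrite prime_coprime ?nth_prime_prime //; apply/negP => /dvdn_leq.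
  have := nth_prime_ge i; rewrite absz_gt0 c0; lia.
case: c c0 ci hc => n c0 ci hc.
  by rewrite /= in hc *; exact: R_nat_unit.
by rewrite NegzE mulrNz unitrN; exact: R_nat_unit.
Qed.


Lemma PaddE (x y : P) i : (x + y) i = x i + y i. Proof. by []. Qed.
Lemma PoppE (x : P) i : (- x) i = - x i. Proof. by []. Qed.
Lemma P0E i : (0 : P) i = 0. Proof. by []. Qed.
Lemma PsubE (x y : P) i : (x - y) i = x i - y i. Proof. by []. Qed.
Lemma PmulnE (x : P) n i : (x *+ n) i = x i *+ n.
Proof. by elim: n => [|n IH]; rewrite ?mulr0n // !mulrS PaddE IH. Qed.
Lemma PmulzE (x : P) c i : (x *~ c) i = x i *~ c.
Proof. case: c => n; first exact: PmulnE. by rewrite NegzE !mulrNz PoppE; congr (- _); exact: (PmulnE x n.+1 i). Qed.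
Lemma Pext (x y : P) : (forall i, x i = y i) -> x = y.
Proof. by move=> h; apply: functional_extensionality_dep. Qed.


Lemma zvecE i : zvec i = 1. Proof. by []. Qed.

Ltac coord := rewrite ?(PaddE, PsubE, PoppE, PmulzE, PmulnE, P0E, zvecE) .
Ltac coordin h := rewrite ?(PaddE, PsubE, PoppE, PmulzE, PmulnE, P0E, zvecE)  in h.

Lemma T0 : Tsub 0. Proof. by exists 0%N. Qed.
Lemma TD x y : Tsub x -> Tsub y -> Tsub (x + y).
Proof.
move=> [N1 h1] [N2 h2]; exists (maxn N1 N2) => i hi.
by rewrite PaddE h1 ?h2 ?addr0 //; lia.
Qed.
Lemma TN x : Tsub x -> Tsub (- x).
Proof. by move=> [N h]; exists N => i hi; rewrite PoppE h ?oppr0. Qed.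
Lemma TB x y : Tsub x -> Tsub y -> Tsub (x - y).
Proof. by move=> hx hy; apply: TD => //; apply: TN. Qed.
Lemma Tz x c : Tsub x -> Tsub (x *~ c).
Proof. by move=> [N h]; exists N => i hi; rewrite PmulzE h ?mul0rz. Qed.

Lemma GT x : Tsub x -> Gsub x.
Proof.
by move=> hx; exists 1 => //; exists x => //; exists 0; rewrite mulr0z addr0.
Qed.
Lemma Gzvec : Gsub zvec.
Proof. by exists 1 => //; exists 0; [exact: T0|exists 1; rewrite add0r]. Qed.

Lemma GD x y : Gsub x -> Gsub y -> Gsub (x + y).
Proof.
move=> [k1 k10 [t1 ht1 [m1 e1]]] [k2 k20 [t2 ht2 [m2 e2]]].
exists (k1 * k2); first by rewrite mulf_neq0.
exists (t1 *~ k2 + t2 *~ k1); first by apply: TD; apply: Tz.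
exists (m1 * k2 + m2 * k1); apply: Pext => i.
have h1 : (x *~ k1) i = (t1 + zvec *~ m1) i by rewrite e1.
have h2 : (y *~ k2) i = (t2 + zvec *~ m2) i by rewrite e2.
coordin h1; coordin h2; coord.
transitivity ((x i *~ k1) *~ k2 + (y i *~ k2) *~ k1); first ring.
rewrite h1 h2; ring.
Qed.

Lemma Gz x c : Gsub x -> Gsub (x *~ c).
Proof.
move=> [k k0 [t ht [m e]]]; exists k => //; exists (t *~ c); first exact: Tz.
exists (m * c); apply: Pext => i.
have h1 : (x *~ k) i = (t + zvec *~ m) i by rewrite e.
coordin h1; coord.
transitivity ((x i *~ k) *~ c); first ring.
rewrite h1; ring.
Qed.

Lemma GN x : Gsub x -> Gsub (- x).
Proof. by move=> h; rewrite -mulrN1z; apply: Gz. Qed.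
Lemma GB x y : Gsub x -> Gsub y -> Gsub (x - y).
Proof. by move=> hx hy; apply: GD => //; apply: GN. Qed.
Lemma G0 : Gsub 0. Proof. exact: (GT T0). Qed.

Lemma Gpure y c : c != 0 -> Gsub (y *~ c) -> Gsub y.
Proof.
move=> c0 [k k0 [t ht [m e]]]; exists (c * k); first by rewrite mulf_neq0.
by exists t => //; exists m; rewrite mulrzA.
Qed.

Lemma TF w c : c != 0 -> Tsub (w *~ c) -> Tsub w.
Proof.
move=> c0 [N h]; exists (maxn N `|c|.+1) => i hi.
have u := R_int_unit (i := i) c0 (_ : (`|c| < i)%N).
have := h i (_ : (N <= i)%N); rewrite PmulzE -mulrzr => /(_ _) e.
rewrite -[w i]mulr1 -(mulrV (u _)) ?mulrA ?e ?mul0r //; lia.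
Qed.


Definition scale (a : P) (x : P) : P := fun j => x j * a j.

Lemma iter_scale a n x : iter n (scale a) x = fun j => x j * a j ^+ n.
Proof.
elim: n => [|n IH]; apply: Pext => j; first by rewrite expr0 mulr1.
by rewrite iterS IH /scale exprSr mulrA.
Qed.

Definition e (i : nat) : P := fun j => if i == j then 1 else 0.
Lemma eii i : e i i = 1. Proof. by rewrite /e eqxx. Qed.
Lemma Te i : Tsub (e i).
Proof. exists i.+1 => j hj; rewrite /e; case: eqP => // eij; lia. Qed.

Definition pv : P := fun j => (nth_prime j)%:R.

Lemma contra_lemma n (x c : P) : c n = pv n ->
  (iter n (scale c) (e n)) n = (iter n.+1 (scale c) x) n -> False.
Proof.
move=> hc; rewrite !iter_scale hc eii mul1r /pv -!natrX.
have -> : ((nth_prime n ^ n.+1)%N%:R : R n) = 0.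
  by apply/eqP; rewrite R_nat_eq0.
rewrite mulr0 => /eqP; rewrite R_nat_eq0 /modulus => /dvdn_leq.
rewrite expn_gt0 ltnNge.
have h2 := nth_prime_ge n.
rewrite leq_exp2l; last lia.
have -> : (nth_prime n <= 0)%N = false by lia.
by move=> /(_ isT); lia.
Qed.

Lemma scale_add a x y : scale a (x + y) = scale a x + scale a y.
Proof. by apply: Pext => j; rewrite /scale PaddE mulrDl. Qed.

Lemma part3 : ~ strongly_coHopfian Tsub.
Proof.
move=> H.
have hend : endo_mod Tsub (@zero_sub P) (scale pv).
  split.
  - by move=> x [N h]; exists N => j hj; rewrite /scale h ?mul0r.
  - by move=> x y _ _; rewrite /zero_sub scale_add subrr.
  - by move=> x y _ _ /eqP; rewrite subr_eq0 => /eqP ->; rewrite /zero_sub subrr.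
have [n Hn] := H _ hend.
have hy : image_mod Tsub (@zero_sub P) (scale pv) n (iter n (scale pv) (e n)).
  split; last by exists (e n); [exact: Te| rewrite /zero_sub subrr].
  rewrite iter_scale; exists n.+1 => j hj; rewrite /e; case: eqP; last by rewrite mul0r.
  by move=> ?; lia.
have [_ [x _ /eqP]] := (Hn _).1 hy.
rewrite subr_eq0 => /eqP ex.
apply: (contra_lemma (x := x) (c := pv) erefl).
exact: (congr1 (fun v => v _) ex).
Qed.

Definition pvm (m : nat) : P := fun j => if j == m then (nth_prime j)%:R else 1.

Lemma part4 : ~ unif_strongly_coHopfian Gsub.
Proof.
move=> [m H].
have hend : endo_mod Gsub (@zero_sub P) (scale (pvm m)).
  split.
  - move=> x hx.
    have -> : scale (pvm m) x = (scale (pvm m) x - x) + x by rewrite subrK.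
    apply: GD => //; apply: GT; exists m.+1 => j hj.
    rewrite PsubE /scale /pvm; case: eqP => [?|_]; first lia.
    by rewrite mulr1 subrr.
  - by move=> x y _ _; rewrite /zero_sub scale_add subrr.
  - by move=> x y _ _ /eqP; rewrite subr_eq0 => /eqP ->; rewrite /zero_sub subrr.
have hy : image_mod Gsub (@zero_sub P) (scale (pvm m)) m (iter m (scale (pvm m)) (e m)).
  split; last by exists (e m); [exact: GT (Te m)| rewrite /zero_sub subrr].
  apply: GT; rewrite iter_scale; exists m.+1 => j hj; rewrite /e; case: eqP; last by rewrite mul0r.
  by move=> ?; lia.
have [_ [x _ /eqP]] := (H _ hend _).1 hy.
rewrite subr_eq0 => /eqP ex.
apply: (contra_lemma (x := x) (c := pvm m) (n := m)); first by rewrite /pvm eqxx.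
exact: (congr1 (fun v => v _) ex).
Qed.


Definition eqT (x y : P) := Tsub (x - y).

Lemma eqT_refl x : eqT x x. Proof. by rewrite /eqT subrr; exact: T0. Qed.
Lemma eqT_sym x y : eqT x y -> eqT y x.
Proof. by rewrite /eqT => h; rewrite -opprB; apply: TN. Qed.
Lemma eqT_trans x y z : eqT x y -> eqT y z -> eqT x z.
Proof.
by rewrite /eqT => h1 h2; have := TD h1 h2; rewrite addrA subrK.
Qed.
Lemma eqT_add x y x' y' : eqT x x' -> eqT y y' -> eqT (x + y) (x' + y').
Proof.
rewrite /eqT => h1 h2; have := TD h1 h2.
by have -> : x + y - (x' + y') = x - x' + (y - y') by rewrite opprD addrACA.
Qed.
Lemma eqT_opp x y : eqT x y -> eqT (- x) (- y).
Proof. by rewrite /eqT => h; rewrite -opprD; apply: TN. Qed.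
Lemma eqT_mulz x y c : eqT x y -> eqT (x *~ c) (y *~ c).
Proof. by rewrite /eqT => h; rewrite -mulrzBl; apply: Tz. Qed.
Lemma eqT_T x : Tsub x -> eqT x 0. Proof. by rewrite /eqT subr0. Qed.
Lemma T_eqT x : eqT x 0 -> Tsub x. Proof. by rewrite /eqT subr0. Qed.

Lemma div_z c : c != 0 -> exists2 u, Gsub u & eqT (u *~ c) zvec.
Proof.
move=> c0.
pose u : P := fun j => if ((c%:~R : R j) \is a GRing.unit) then (c%:~R)^-1 else 0.
have hT : eqT (u *~ c) zvec.
  rewrite /eqT; exists `|c|.+1 => j hj; rewrite PsubE PmulzE /u.
  have uj : (c%:~R : R j) \is a GRing.unit by apply: R_int_unit.
  by rewrite uj -mulrzr mulVr // subrr.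
exists u => //; exists c => //; exists (u *~ c - zvec) => //; exists 1.
by rewrite mulr1z subrK.
Qed.

Section Quot.
Variable f : P -> P.
Hypothesis fG : forall x, Gsub x -> Gsub (f x).
Hypothesis fadd : forall x y, Gsub x -> Gsub y -> Tsub (f (x + y) - (f x + f y)).
Hypothesis fcong : forall x y, Gsub x -> Gsub y -> Tsub (x - y) -> Tsub (f x - f y).

Lemma f0 : Tsub (f 0).
Proof.
have := fadd G0 G0; rewrite addr0.
have -> : f 0 - (f 0 + f 0) = - f 0 by rewrite opprD addrA subrr add0r.
by move/TN; rewrite opprK.
Qed.

Lemma fT t : Tsub t -> Tsub (f t).
Proof.
move=> ht; have := fcong (GT ht) G0 (_ : Tsub (t - 0)).
rewrite subr0 => /(_ ht) h; have := TD h f0; by rewrite subrK.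
Qed.

Lemma fmuln x n : Gsub x -> eqT (f (x *+ n)) (f x *+ n).
Proof.
move=> hx; elim: n => [|n IH]; first by rewrite !mulr0n; apply: eqT_T; exact: f0.
have hxn : Gsub (x *+ n) by exact: (Gz (n%:Z) hx).
rewrite !mulrS; apply: eqT_trans (fadd hx hxn) _.
by apply: eqT_add => //; exact: eqT_refl.
Qed.

Lemma fopp x : Gsub x -> eqT (f (- x)) (- f x).
Proof.
move=> hx; have := fadd hx (GN hx); rewrite subrr => h.
have h2 := TD (TN h) f0.
rewrite /eqT opprK; rewrite opprB subrK in h2; by rewrite addrC.
Qed.

Lemma fmulz x c : Gsub x -> eqT (f (x *~ c)) (f x *~ c).
Proof.
move=> hx; case: c => n; first exact: fmuln.
rewrite NegzE !mulrNz.
apply: eqT_trans (fopp (Gz (n.+1%:Z) hx)) _.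
by apply: eqT_opp; exact: fmuln.
Qed.

Lemma fcongE x y : Gsub x -> Gsub y -> eqT x y -> eqT (f x) (f y).
Proof. exact: fcong. Qed.

Lemma fz_T : Tsub (f zvec) -> forall x, Gsub x -> Tsub (f x).
Proof.
move=> hz x hx; have [k k0 [t ht [m e]]] := hx.
apply: (TF k0); apply: T_eqT.
apply: eqT_trans (eqT_sym (fmulz k hx)) _.
rewrite e.
have hzm : Gsub (zvec *~ m) by apply: Gz; exact: Gzvec.
apply: eqT_trans (fadd (GT ht) hzm) _.
rewrite -[0]addr0; apply: eqT_add; first exact: eqT_T (fT ht).
apply: eqT_trans (fmulz m Gzvec) _.
by apply: eqT_T; apply: Tz.
Qed.

Lemma surj : ~ Tsub (f zvec) -> forall w, Gsub w -> exists2 x, Gsub x & eqT (f x) w.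
Proof.
move=> hz w hw.
have [a a0 [t0 ht0 [m0 e0]]] := fG Gzvec.
have m00 : m0 != 0.
  apply/negP => /eqP m0E; apply: hz; apply: (TF a0).
  by rewrite e0 m0E mulr0z addr0.
have [k k0 [t ht [m e]]] := hw.
have c0 : k * m0 != 0 by rewrite mulf_neq0.
have [u hu hu'] := div_z c0.
exists (u *~ (a * m)); first exact: Gz.
apply: (TF c0); rewrite mulrzBl.
have huc : Gsub (u *~ (k * m0)) by apply: Gz.
apply: (@eqT_trans _ ((f u *~ (a * m)) *~ (k * m0))).
  exact: eqT_mulz (fmulz _ hu).
rewrite mulrzAC.
apply: (@eqT_trans _ (f (u *~ (k * m0)) *~ (a * m))).
  exact: eqT_mulz (eqT_sym (fmulz _ hu)).
apply: (@eqT_trans _ (f zvec *~ (a * m))).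
  exact: eqT_mulz (fcongE huc Gzvec hu').
rewrite mulrzA e0 mulrzA e.
apply: (@eqT_trans _ (zvec *~ m0 *~ m)).
  rewrite /eqT mulrzDl addrK; exact: Tz.
rewrite mulrzAC; apply: eqT_sym.
rewrite /eqT mulrzDl addrK; exact: Tz.
Qed.

Lemma quot_main : exists n : nat, forall y,
  image_mod Gsub Tsub f n y <-> image_mod Gsub Tsub f n.+1 y.
Proof.
exists 1%N => y; split; last first.
  by move=> [hy [x hx h]]; split => //; exists (f x) => //; exact: fG.
move=> [hy [x hx h]]; split => //=.
case: (pselect (Tsub (f zvec))) => hz.
  exists 0; first exact: G0.
  have hf0 : Tsub (f 0) := f0.
  have hff0 : Tsub (f (f 0)) by apply: fT.
  have hfx : Tsub (f x) by apply: fz_T.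
  have := TB (TD h hfx) hff0; by rewrite /= subrK.
have [x2 hx2 e2] := surj hz hx.
exists x2 => //=.
have := fcongE (fG hx2) hx e2; rewrite /eqT => h2.
have := TD h (TN h2); by rewrite opprB addrA subrK.
Qed.
End Quot.

Lemma part2 : strongly_coHopfian_quot Gsub Tsub.
Proof. by move=> f [h1 h2 h3]; apply: quot_main. Qed.


Section Full.
Variable f : P -> P.
Hypothesis fG : forall x, Gsub x -> Gsub (f x).
Hypothesis fadd : forall x y, Gsub x -> Gsub y -> f (x + y) = f x + f y.

Lemma g0 : f 0 = 0.
Proof.
have := fadd G0 G0; rewrite addr0 => /eqP; rewrite -subr_eq0 opprD addrA subrr add0r.
by rewrite oppr_eq0 => /eqP.
Qed.

Lemma gmuln x n : Gsub x -> f (x *+ n) = f x *+ n.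
Proof.
move=> hx; elim: n => [|n IH]; first by rewrite !mulr0n g0.
have hxn : Gsub (x *+ n) by exact: (Gz (n%:Z) hx).
by rewrite !mulrS fadd // IH.
Qed.

Definition a i : R i := f (e i) i.

Lemma coordf y i : Gsub y -> f y i = a i * y i.
Proof.
move=> hy.
pose n := nat_of_ord (y i).
pose ye := e i *+ n.
have hye : ye i = y i by rewrite /ye PmulnE eii natr_Zp.
pose y' := y - ye.
have Tye : Tsub ye by apply: (Tz (n%:Z)); exact: Te.
have Gy' : Gsub y' by apply: GB => //; exact: GT.
pose M := modulus i.
pose w : P := fun j => if j == i then 0 else y' j * (M%:R)^-1.
have ew : w *+ M = y'.
  apply: Pext => j; rewrite PmulnE /w; case: eqP => [->|ne].
    by rewrite mul0rn /y' PsubE hye subrr.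
  have u : (M%:R : R j) \is a GRing.unit.
    by rewrite unitZpE ?modulus_gt1 //; apply: coprime_modulus.
  by rewrite -[y' j / _ *+ M]mulr_natr mulrVK.
have Gw : Gsub w.
  have M0 : M%:Z != 0 by rewrite eqz_nat; have := modulus_gt1 i; rewrite /M; lia.
  apply: (Gpure M0).
  have : Gsub (w *+ M) by rewrite ew.
  by [].
have fy : f y = f w *+ M + f (e i) *+ n.
  rewrite -gmuln // ew -gmuln; last exact: (GT (Te i)).
  rewrite -fadd //; last exact: GT.
  by rewrite /y' subrK.
rewrite fy PaddE !PmulnE -[X in X + _]mulr_natr -[X in _ + X]mulr_natr.
have -> : (M%:R : R i) = 0 by apply/eqP; rewrite R_nat_eq0.
by rewrite mulr0 add0r /a natr_Zp.
Qed.

Lemma iterf n y : Gsub y -> Gsub (iter n f y) /\ iter n f y = fun j => y j * a j ^+ n.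
Proof.
move=> hy; elim: n => [|n [IH1 IH2]].
  by split => //; apply: Pext => j; rewrite expr0 mulr1.
split; first by rewrite iterS; exact: fG.
apply: Pext => j; rewrite iterS coordf // IH2 exprSr; ring.
Qed.

Lemma full_main : exists n : nat, forall y,
  image_mod Gsub (@zero_sub P) f n y <-> image_mod Gsub (@zero_sub P) f n.+1 y.
Proof.
have [k k0 [t [Nt ht] [m e]]] := fG Gzvec.
pose N := maxn Nt (maxn `|k|.+1 `|m|.+1).
have Hk : forall j, (N <= j)%N -> a j *~ k = m%:~R.
  move=> j hj; have : (f zvec *~ k) j = (t + zvec *~ m) j by rewrite e.
  rewrite PmulzE PaddE ht; last lia.
  by rewrite add0r PmulzE coordf ?zvecE ?mulr1 //; exact: Gzvec.
have uk : forall j, (N <= j)%N -> (k%:~R : R j) \is a GRing.unit.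
  by move=> j hj; apply: R_int_unit => //; lia.
have L0 : m = 0 -> forall j, (N <= j)%N -> a j = 0.
  move=> m0 j hj; have := Hk j hj; rewrite m0 -mulrzr => h.
  by rewrite -[a j]mulr1 -(mulrV (uk j hj)) mulrA h mul0r.
have L1 : m != 0 -> forall j, (N <= j)%N -> a j \is a GRing.unit.
  move=> m0 j hj; have um : (m%:~R : R j) \is a GRing.unit.
    by apply: R_int_unit => //; lia.
  by move: um; rewrite -(Hk j hj) -mulrzr unitrM => /andP[].
exists N.+1 => y; split; last first.
  move=> [hy [x hx h]]; split => //; exists (f x); first exact: fG.
  by rewrite -iterSr.
move=> [hy [x hx /eqP]]; rewrite subr_eq0 => /eqP ey; split => //.
pose x' : P := fun j => if a j \is a GRing.unit then (a j)^-1 * x j else 0.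
have Gx' : Gsub x'.
  have [m0|m0] := eqVneq m 0.
    apply: GT; exists N => j hj; rewrite /x' L0 // unitr0 //.
  apply: (Gpure (c := m)) => //.
  have -> : x' *~ m = (x' *~ m - x *~ k) + x *~ k by rewrite subrK.
  apply: GD; last exact: Gz.
  apply: GT; exists N => j hj; rewrite PsubE !PmulzE /x' L1 //.
  have hk := Hk j hj.
  set b := (a j)^-1.
  transitivity (x j * (b * m%:~R) - x j *~ k); first ring.
  rewrite -hk.
  transitivity ((x j * (b * a j)) *~ k - x j *~ k); first ring.
  by rewrite mulVr ?L1 // mulr1 subrr.
exists x' => //; apply/eqP; rewrite subr_eq0; apply/eqP.
rewrite ey (iterf _ hx).2 (iterf _ Gx').2; apply: Pext => j; rewrite /x'.
case: ifP => ua.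
  transitivity (x j * a j ^+ N.+1 * ((a j)^-1 * a j)); first by rewrite mulVr ?mulr1.
  rewrite [in RHS]exprSr; set b := (a j)^-1; set c := a j ^+ N.+1; ring.
suff -> : a j ^+ N.+1 = 0 by rewrite mulr0 mul0r.
case: (leqP N j) => hj.
  have [m0|m0] := eqVneq m 0; first by rewrite L0 // expr0n.
  by rewrite L1 in ua.
have hn := R_nilp (negbT ua).
by rewrite -(subnKC (_ : (j.+1 <= N.+1)%N)) ?exprD ?hn ?mul0r //; lia.
Qed.
End Full.

Lemma part1 : strongly_coHopfian Gsub.
Proof.
move=> f [h1 h2 h3]; apply: full_main => // x y hx hy.
by have := h2 x y hx hy; rewrite /zero_sub => /eqP; rewrite subr_eq0 => /eqP.
Qed.

Theorem mainTheorem15 :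
  [/\ strongly_coHopfian Gsub,
      strongly_coHopfian_quot Gsub Tsub,
      ~ strongly_coHopfian Tsub
    & ~ unif_strongly_coHopfian Gsub].
Proof. split; [exact: part1 | exact: part2 | exact: part3 | exact: part4]. Qed.
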